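(* Let $n\ge1$ and radii $R_1,\dots,R_n>0$. For a Kaluza–Klein mode $\underline m=(\underline m_1,\dots,\underline m_n)\in\mathbb{Z}_{\ge0}^n\setminus\{0\}$ set $v_i=2\pi\underline m_i/R_i$ and $|v|^2=\sum_i v_i^2$. In the compactified Lagrangian (see context), the quadratic (coupling-independent) part for the mode $\underline m$ gives: the vector field $A^{(\underline m)a}_\mu$ squared mass $|v|^2$; and the $n$ scalars $A^{(\underline m)a}_{\bar\mu}$ ($\bar\mu=5,\dots,4+n$) the mass matrix $M=|v|^2 I_n-vv^{T}$, which is real symmetric with eigenvalue $0$ of multiplicity one (eigenvector $v$) and eigenvalue $|v|^2$ of multiplicity $n-1$. Consequently, organizing modes into KK towers according to which Fourier indices are nonzero (one tower per nonempty subset of $\{1,\dots,n\}$ for each field type), the compactified theory contains one massless gauge vector field $A^{(0,\dots,0)a}_\mu$, $2^n-1$ KK towers of massive vector fields, $2^n-1$ KK towers of massless (pseudo-Goldstone) scalar fields, and $(2^n-1)(n-1)$ KK towers of massive scalar fields, each massive field of mode $\underline m$ having squared mass $\sum_i(2\pi\underline m_i/R_i)^2$.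
   Context: Setting: pure $SU(N)$ Yang–Mills theory on $\mathcal{M}^4\times(S^1/Z_2)^n$ with Lagrangian $-\tfrac14\mathcal{F}^a_{MN}\mathcal{F}^{MN}_a$, $\mathcal{F}^a_{MN}=\partial_M\mathcal{A}^a_N-\partial_N\mathcal{A}^a_M+g_mf^{abc}\mathcal{A}^b_M\mathcal{A}^c_N$, fields periodic in $y^i$ with period $R_i$, $\mathcal{A}_\mu$ even and $\mathcal{A}_{\bar\mu}$ odd under $y\to-y$, expanded as $\mathcal{A}^a_\mu=P^{-1/2}A^{(0)a}_\mu+(2/P)^{1/2}\sum'A^{(\underline m)a}_\mu\cos\theta_{\underline m}$, $\mathcal{A}^a_{\bar\mu}=(2/P)^{1/2}\sum'A^{(\underline m)a}_{\bar\mu}\sin\theta_{\underline m}$ with $\theta_{\underline m}=2\pi\sum_i\underline m_iy^i/R_i$, $P=\prod R_i$, $\sum'$ over $\mathbb{Z}_{\ge0}^n\setminus\{0\}$. The compactified Lagrangian is the integral of the Lagrangian over $y\in\prod_i[0,R_i]$, a function of the four-dimensional fields $A^{(0)a}_\mu$, $A^{(\underline m)a}_\mu$, $A^{(\underline m)a}_{\bar\mu}$. Extra dimensions are spacelike. Massless scalars are called pseudo-Goldstone bosons. *)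

(* Defs.v *)
From HB Require Import structures.
From mathcomp Require Import all_boot all_order all_algebra.
From mathcomp Require Import all_classical all_reals all_analysis.
Set Implicit Arguments. Unset Strict Implicit. Unset Printing Implicit Defensive.
Import Order.TTheory GRing.Theory Num.Theory.
Import numFieldNormedType.Exports.
Local Open Scope classical_set_scope.
Local Open Scope ring_scope.

Section KK.
Variable R : realType.

Definition Pvol (n : nat) (Rad : 'I_n -> R) : R := \prod_(i < n) Rad i.

Definition theta (n : nat) (Rad : 'I_n -> R) (m : 'I_n -> nat) (y : 'rV[R]_n) : R :=
  2 * pi * \sum_(i < n) (m i)%:R * y 0 i / Rad i.

Definition kkv (n : nat) (Rad : 'I_n -> R) (m : 'I_n -> nat) : 'rV[R]_n :=
  \row_i (2 * pi * (m i)%:R / Rad i).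

Definition vnorm2 (n : nat) (v : 'rV[R]_n) : R := \sum_(i < n) v 0 i ^+ 2.

Definition mass_matrix (n : nat) (v : 'rV[R]_n) : 'M[R]_n :=
  (vnorm2 v)%:M - v^T *m v.

(* metric of M^4 x (S^1/Z_2)^n, signature (+,-,...,-): extra dims spacelike.
   Index M : 'I_(4+n); M < 4 are the 4d indices mu, M = 4+i the extra ones. *)
Definition eta (n : nat) (M : 'I_(4 + n)) : R := if (M == 0 :> nat) then 1 else -1.

Definition mink (n : nat) (a : 'rV[R]_4) : R :=
  \sum_(mu < 4) eta (lshift n mu) * a 0 mu ^+ 2.

(* partial derivative d_M of a field configuration that does not depend on
   the 4d coordinates x (mass terms = terms without 4d derivatives) *)
Definition partial (n : nat) (M : 'I_(4 + n)) (f : 'rV[R]_n -> R) (y : 'rV[R]_n) : R :=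
  match fintype.split M with
  | inl _ => 0
  | inr i => derive f y (delta_mx 0 i : 'rV[R]_n)
  end.

(* coupling-independent (g_m = 0) field strength, colour by colour *)
Definition fstrength (n : nat) (A : 'I_(4 + n) -> 'rV[R]_n -> R)
  (M N : 'I_(4 + n)) (y : 'rV[R]_n) : R :=
  partial M (A N) y - partial N (A M) y.

Definition Ldensity (n d : nat) (A : 'I_d -> 'I_(4 + n) -> 'rV[R]_n -> R)
  (y : 'rV[R]_n) : R :=
  - (1 / 4) * \sum_(c < d) \sum_(M < 4 + n) \sum_(N < 4 + n)
      eta M * eta N * fstrength (A c) M N y ^+ 2.

(* integral over y in prod_i [0, R_i], as an iterated Lebesgue integral *)
Definition upd (n : nat) (y : 'rV[R]_n) (i : 'I_n) (t : R) : 'rV[R]_n :=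
  \row_j (if j == i then t else y 0 j).

Fixpoint box_int_seq (n : nat) (Rad : 'I_n -> R) (s : seq 'I_n)
  (f : 'rV[R]_n -> R) (y : 'rV[R]_n) : R :=
  match s with
  | [::] => f y
  | i :: s' => Rintegral (@lebesgue_measure R) `[0, Rad i]%classic
                 (fun t => box_int_seq Rad s' f (upd y i t))
  end.

Definition box_int (n : nat) (Rad : 'I_n -> R) (f : 'rV[R]_n -> R) : R :=
  box_int_seq Rad (enum 'I_n) f 0.

(* configuration where only the KK mode m (nonzero) is excited:
   A^a_mu = (2/P)^{1/2} A^{(m)a}_mu cos theta_m,
   A^a_{4+i} = (2/P)^{1/2} A^{(m)a}_{4+i} sin theta_m *)
Definition kk_field (n d : nat) (Rad : 'I_n -> R) (m : 'I_n -> nat)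
  (a : 'I_d -> 'rV[R]_4) (b : 'I_d -> 'rV[R]_n)
  (c : 'I_d) (M : 'I_(4 + n)) (y : 'rV[R]_n) : R :=
  match fintype.split M with
  | inl mu => Num.sqrt (2 / Pvol Rad) * a c 0 mu * cos (theta Rad m y)
  | inr i => Num.sqrt (2 / Pvol Rad) * b c 0 i * sin (theta Rad m y)
  end.

(* configuration where only the zero mode is excited:
   A^a_mu = P^{-1/2} A^{(0)a}_mu, A^a_{4+i} = 0 *)
Definition zero_field (n d : nat) (Rad : 'I_n -> R) (a : 'I_d -> 'rV[R]_4)
  (c : 'I_d) (M : 'I_(4 + n)) (y : 'rV[R]_n) : R :=
  match fintype.split M with
  | inl mu => (Num.sqrt (Pvol Rad))^-1 * a c 0 mu
  | inr _ => 0
  end.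

(* mass part (quadratic, no 4d derivatives) of the compactified Lagrangian *)
Definition Lmass_mode (n d : nat) (Rad : 'I_n -> R) (m : 'I_n -> nat)
  (a : 'I_d -> 'rV[R]_4) (b : 'I_d -> 'rV[R]_n) : R :=
  box_int Rad (Ldensity (kk_field Rad m a b)).

Definition Lmass_zero (n d : nat) (Rad : 'I_n -> R) (a : 'I_d -> 'rV[R]_4) : R :=
  box_int Rad (Ldensity (zero_field Rad a)).

(* the KK tower labelled by a nonempty S : modes whose nonzero indices are S *)
Definition in_tower (n : nat) (S : {set 'I_n}) (m : 'I_n -> nat) : bool :=
  [forall i, (i \in S) == (m i != 0%N)].

End KK.

(* Main.v *)
Require Import Defs.
From HB Require Import structures.
From mathcomp Require Import all_boot all_order all_algebra.
From mathcomp Require Import all_classical all_reals all_analysis.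
From mathcomp Require Import zify ring lra.
Import Order.TTheory GRing.Theory Num.Theory.
Import numFieldNormedType.Exports.
Local Open Scope ring_scope.

Set Implicit Arguments. Unset Strict Implicit. Unset Printing Implicit Defensive.

Module Helpers.
Local Open Scope ring_scope.
Lemma det_rank1 (R : idomainType) n (t : R) (u w : 'rV[R]_n.+1) : t != 0 ->
  \det (t%:M + u^T *m w) = t ^+ n * (t + (w *m u^T) 0 0).
Proof.
move=> t0.
pose B := block_mx (1 : 'M[R]_1) w (- (u^T)) (t%:M : 'M[R]_n.+1).
have E1 : B = block_mx 1 0 (- (u^T)) 1 *m block_mx 1 w 0 (t%:M + u^T *m w).
  rewrite mulmx_block /B !mul1mx !mul0mx !mulmx1 !addr0.
  by rewrite mulNmx addrC -addrA subrr addr0.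
have E2 : B *m block_mx (t%:M) 0 (u^T) 1 = block_mx (t%:M + w *m u^T) w 0 (t%:M).
  rewrite mulmx_block /B !mul1mx !mulmx0 !mulmx1 !add0r.
  by rewrite mul_mx_scalar mul_scalar_mx scalerN addNr.
have := congr1 determinant E2.
rewrite det_mulmx E1 det_mulmx det_lblock det_ublock det_lblock det_ublock.
rewrite !det1 !mul1r mulr1 det_scalar det_mx11 !mxE eqxx mulr1n expr1 => E.
rewrite det_scalar in E.
apply: (mulIf t0); rewrite E exprSr mulrA; congr (_ * _); exact: mulrC.
Qed.

Lemma vvT (R : comNzRingType) n (v : 'rV[R]_n) :
  v *m v^T = (\sum_i v 0 i ^+ 2)%:M.
Proof.
apply/matrixP => i j; rewrite !ord1 !mxE eqxx mulr1n.
by apply: eq_bigr => k _; rewrite !mxE expr2.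
Qed.

Section M.
Variable F : fieldType.
Variable n : nat.
Variable v : 'rV[F]_n.
Let c := \sum_i v 0 i ^+ 2.
Let M := c%:M - v^T *m v.

Lemma MvT : M *m v^T = 0.
Proof. by rewrite /M mulmxBl -mulmxA vvT mul_scalar_mx mul_mx_scalar subrr. Qed.

Lemma MT : M^T = M.
Proof. by rewrite /M linearB /= tr_scalar_mx trmx_mul trmxK. Qed.

Hypothesis c0 : c != 0.

Lemma v_neq0 : v != 0.
Proof.
apply: contra c0; rewrite /c => /eqP ->; rewrite big1 // => i _; by rewrite mxE expr0n.
Qed.

Lemma rank_vv : \rank (v^T *m v) = 1%N.
Proof.
apply/eqP; rewrite eqn_leq; apply/andP; split.
  apply: leq_trans (mxrankM_maxr _ _) _; exact: rank_leq_row.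
rewrite lt0n mxrank_eq0.
have : v != 0 := v_neq0.
apply: contra => /eqP vv0; apply/eqP/rowP => i.
have := congr1 (fun A : 'M[F]_n => A i i) vv0; rewrite !mxE big_ord1 !mxE => /eqP.
by rewrite mulf_eq0 orbb => /eqP ->.
Qed.

Lemma rank_cI : \rank (c%:M : 'M[F]_n) = n.
Proof. by rewrite -scalemx1 mxrank_scale_nz // mxrank1. Qed.

Lemma rank_M : \rank M = n.-1.
Proof.
have h1 := mulmx0_rank_max MvT; rewrite mxrank_tr rank_rV v_neq0 addn1 in h1.
have h2 : (\rank (c%:M : 'M[F]_n) <= \rank M + \rank (v^T *m v))%N.
  rewrite (_ : c%:M = M + v^T *m v); first exact: mxrank_add.
  by rewrite /M subrK.
rewrite rank_cI rank_vv in h2.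
move: h1 h2; set r := \rank M; lia.
Qed.

Lemma rank_eig0 : (0 < n)%N -> \rank (eigenspace M 0) = 1%N.
Proof.
move=> n0; rewrite /eigenspace mxrank_ker (_ : (0 : F)%:M = 0 :> 'M[F]_n); last by apply/matrixP => i j; rewrite !mxE mul0rn.
rewrite subr0 rank_M.
by move: n0; case: (n) => [|k] /=; rewrite ?subSS ?subn0 // ; lia.
Qed.

Lemma rank_eigc : \rank (eigenspace M c) = n.-1.
Proof.
rewrite /eigenspace mxrank_ker /M addrC addKr mxrank_opp rank_vv.
by rewrite subn1.
Qed.
End M.

Lemma char_poly_rank1 (F : fieldType) k (v : 'rV[F]_k.+1) :
  char_poly ((\sum_i v 0 i ^+ 2)%:M - v^T *m v) =
  'X * ('X - (\sum_i v 0 i ^+ 2)%:P) ^+ k.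
Proof.
set c := \sum_i _.
pose u := map_mx polyC v.
have t0 : 'X - c%:P != 0 by rewrite polyXsubC_eq0.
have E : char_poly_mx (c%:M - v^T *m v) = ('X - c%:P)%:M + u^T *m u.
  apply/matrixP => i j; rewrite !mxE !big_ord1 !mxE polyCB polyCM polyCMn.
  by case: (i == j); rewrite /= ?mulr1n ?mulr0n ?subr0 ?add0r ?sub0r ?opprB ?addrA ?opprK // addrAC.
rewrite /char_poly E det_rank1 // mulrC; congr (_ * _).
rewrite !mxE (eq_bigr (fun i => (v 0 i ^+ 2)%:P)); last by move=> i _; rewrite !mxE -polyCM expr2.
by rewrite -rmorph_sum subrK.
Qed.

Local Open Scope classical_set_scope.
Local Open Scope ring_scope.
Section S.
Variable R : realType.

Lemma is_derive_lin (al k x : R) : is_derive x 1 (fun h : R => al + k * h) k.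
Proof.
by apply: is_derive_eq; rewrite add0r mul1r [k%:A]mulr1.
Qed.

Lemma is_derive_coslin (al k x : R) :
  is_derive x 1 (fun h : R => cos (al + k * h)) (- sin (al + k * x) * k).
Proof.
apply: (@is_derive1_comp R cos (fun h => al + k * h)); exact: is_derive_lin.
Qed.

Lemma is_derive_sinlin (al k x : R) :
  is_derive x 1 (fun h : R => sin (al + k * h)) (cos (al + k * x) * k).
Proof.
apply: (@is_derive1_comp R sin (fun h => al + k * h)). exact: is_derive_lin.
Qed.


Lemma cont_coslin (al k : R) : continuous (fun h : R => cos (al + k * h)).
Proof.
move=> x; apply: differentiable_continuous; apply/derivable1_diffP.
by have [] := is_derive_coslin al k x.
Qed.

Lemma int_coslin (Rr k al : R) : 0 < Rr -> k != 0 ->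
  \int[@lebesgue_measure R]_(t in `[0, Rr]) cos (al + k * t) =
  (sin (al + k * Rr) - sin al) / k.
Proof.
move=> R0 k0.
pose F := fun h : R => k^-1 * sin (al + k * h).
have dF : forall x : R, is_derive x 1 F (cos (al + k * x)).
  move=> x; have := is_deriveZ k^-1 (is_derive_sinlin al k x).
  move=> H; apply: (@is_derive_eq _ _ _ _ _ _ _ _ H).
  by rewrite -[_ *: _]/(k^-1 * _) mulrCA mulVf // mulr1.
have cF : continuous F.
  move=> x; apply: differentiable_continuous; apply/derivable1_diffP.
  by have [] := dF x.
have := @continuous_FTC2 R (fun t => cos (al + k * t)) F 0 Rr R0 _ _ _.
rewrite /Rintegral => ->.
- by rewrite -EFinB /= /F mulr0 addr0 mulrBl !(mulrC _ k^-1).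
- by apply: continuous_in_subspaceT => x ?; exact: cont_coslin.
- split.
  + by move=> x _; have [] := dF x.
  + exact: cvg_at_right_filter (cF 0).
  + exact: cvg_at_left_filter (cF Rr).
- by move=> x _; rewrite derive1E; have [] := dF x.
Qed.


Lemma int_cst (Rr C : R) : 0 <= Rr ->
  \int[@lebesgue_measure R]_(t in `[0, Rr]) C = C * Rr.
Proof.
move=> R0; rewrite Rintegral_cst //= lebesgue_measure_itv /= lte_fin.
case: ltgtP R0 => //= [h _|<- _]; first by rewrite subr0.
by rewrite mulr0.
Qed.

Lemma integ_coslin (Rr al k : R) :
  (@lebesgue_measure R).-integrable `[0, Rr] (EFin \o (fun t => cos (al + k * t))).
Proof.
apply: continuous_compact_integrable; first exact: segment_compact.
by apply: continuous_in_subspaceT => x ?; exact: cont_coslin.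
Qed.

Lemma int_step (Rr C D al k : R) : 0 <= Rr ->
  \int[@lebesgue_measure R]_(t in `[0, Rr]) (C + D * cos (al + k * t)) =
  C * Rr + D * \int[@lebesgue_measure R]_(t in `[0, Rr]) cos (al + k * t).
Proof.
move=> R0; rewrite RintegralD //.
- by rewrite int_cst // RintegralZl //; exact: integ_coslin.
- apply: continuous_compact_integrable; first exact: segment_compact.
  by apply: continuous_in_subspaceT => x ?; exact: cst_continuous.
- apply: continuous_compact_integrable; first exact: segment_compact.
  apply: continuous_in_subspaceT => x ?; apply: continuousM; first exact: cst_continuous.
  exact: cont_coslin.
Qed.

End S.

Section Box.
Variable R : realType.
Variable n : nat.
Variable Rad : 'I_n -> R.
Variable m : 'I_n -> nat.
Hypothesis Rpos : forall i, 0 < Rad i.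

Definition vk i := 2 * pi * (m i)%:R / Rad i.

Lemma theta_upd y i t : theta Rad m (upd y i t) = theta Rad m y + (t - y 0 i) * vk i.
Proof.
rewrite /theta /vk (bigD1 i) //= [X in _ = 2 * pi * X + _](bigD1 i) //= !mxE eqxx.
rewrite (eq_bigr (fun j => (m j)%:R * y 0 j / Rad j)); last first.
  by move=> j /negbTE ji; rewrite !mxE ji.
ring.
Qed.

Lemma theta_dir y i h :
  theta Rad m (h *: delta_mx 0 i + y) = theta Rad m y + h * vk i.
Proof.
rewrite /theta /vk (bigD1 i) //= [X in _ = 2 * pi * X + _](bigD1 i) //= !mxE !eqxx.
rewrite (eq_bigr (fun j => (m j)%:R * y 0 j / Rad j)); last first.
  by move=> j /negbTE ji; rewrite !mxE ji andbF mulr0 add0r.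
rewrite /= mulr1n mulr1.
ring.
Qed.

Lemma sin_period (al : R) i : sin (al + 2 * vk i * Rad i) = sin al.
Proof.
have R0 : Rad i != 0 by rewrite gt_eqF.
rewrite (_ : 2 * vk i * Rad i = (pi *+ 2) *+ (m i * 2)); first exact: (periodicn (@sinD2pi R) (m i * 2) al).
rewrite /vk -[_ *+ (m i * 2)]mulr_natr -[pi *+ 2]mulr_natr natrM; by field.
Qed.

Lemma box_seq s A B y0 :
  box_int_seq Rad s (fun y => A + B * cos (2 * theta Rad m y)) y0 =
  \prod_(i <- s) Rad i *
    (A + B * (if all (fun i => m i == 0%N) s then cos (2 * theta Rad m y0) else 0)).
Proof.
elim: s y0 => [|i s IH] y0 /=; first by rewrite big_nil mul1r.
rewrite big_cons.
under eq_Rintegral do rewrite IH.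
have Ri := Rpos i.
case: (all _ s); last first.
  by rewrite andbF int_cst ?ltW // mulrC mulrA.
have E : forall t, 2 * theta Rad m (upd y0 i t) =
    (2 * theta Rad m y0 - 2 * y0 0 i * vk i) + 2 * vk i * t.
  by move=> t; rewrite theta_upd; ring.
under eq_Rintegral => t _ do rewrite E mulrDr mulrA.
rewrite int_step ?ltW //.
case: (eqVneq (m i) 0%N) => mi /=.
  have vi : vk i = 0 by rewrite /vk mi mulr0 mul0r.
  rewrite vi !mulr0 subr0.
  under eq_Rintegral do rewrite mul0r addr0.
  rewrite int_cst ?ltW //; ring.
rewrite int_coslin // ?sin_period ?subrr ?mul0r ?mulr0 ?addr0; first ring.
apply: mulf_neq0; first by rewrite pnatr_eq0.
rewrite /vk; apply: mulf_neq0; last by rewrite invr_eq0 gt_eqF.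
apply: mulf_neq0; last by rewrite pnatr_eq0.
by apply: mulf_neq0; [rewrite pnatr_eq0 | rewrite gt_eqF // pi_gt0].
Qed.
End Box.

Section D.
Variable R : realType.
Variable n : nat.

Lemma split_l (i : 'I_4) : fintype.split (lshift n i) = inl i.
Proof. exact: (unsplitK (inl i : 'I_4 + 'I_n)). Qed.

Lemma split_r (i : 'I_n) : fintype.split (rshift 4 i) = inr i.
Proof. exact: (unsplitK (inr i : 'I_4 + 'I_n)). Qed.

Lemma eta_r (i : 'I_n) : Defs.eta R (rshift 4 i) = -1.
Proof. by rewrite /Defs.eta. Qed.

Lemma derive_dir (f : 'rV[R]_n -> R) y e :
  derive f y e = derive (fun h : R => f (h *: e + y)) 0 1.
Proof.
rewrite /derive; do 2 f_equal; apply: funext => h /=.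
by rewrite scale0r add0r addr0 [h *: 1]mulr1.
Qed.

Lemma partial_l mu (f : 'rV[R]_n -> R) y : partial (lshift n mu) f y = 0.
Proof. by rewrite /partial split_l. Qed.

Variable Rad : 'I_n -> R.
Variable m : 'I_n -> nat.

Lemma partial_cos i C y :
  partial (rshift 4 i) (fun y => C * cos (theta Rad m y)) y =
  - (C * sin (theta Rad m y) * vk Rad m i).
Proof.
rewrite /partial split_r derive_dir.
rewrite (_ : (fun h => _) = C \*: (fun h => cos (theta Rad m y + vk Rad m i * h))); last first.
  by apply: funext => h /=; rewrite theta_dir [_ * h]mulrC.
rewrite derive_val mulr0 addr0 add0r mul1r -[C *: _]/(C * _) -[(vk _ _ _)%:A]/(vk Rad m i * 1); ring.
Qed.

Lemma partial_sin i C y :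
  partial (rshift 4 i) (fun y => C * sin (theta Rad m y)) y =
  C * cos (theta Rad m y) * vk Rad m i.
Proof.
rewrite /partial split_r derive_dir.
rewrite (_ : (fun h => _) = C \*: (fun h => sin (theta Rad m y + vk Rad m i * h))); last first.
  by apply: funext => h /=; rewrite theta_dir [_ * h]mulrC.
rewrite derive_val mulr0 addr0 add0r mul1r -[C *: _]/(C * _) -[(vk _ _ _)%:A]/(vk Rad m i * 1); ring.
Qed.
End D.

Section K.
Variable R : realType.
Variables n d : nat.
Variable Rad : 'I_n -> R.
Variable m : 'I_n -> nat.
Variable a : 'I_d -> 'rV[R]_4.
Variable b : 'I_d -> 'rV[R]_n.
Let s := Num.sqrt (2 / Pvol Rad).
Let A := kk_field Rad m a b.
Let th := theta Rad m.
Let v := vk Rad m.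

Lemma kk_l c mu : A c (lshift n mu) = fun y => (s * a c 0 mu) * cos (th y).
Proof. by apply: funext => y; rewrite /A /kk_field split_l. Qed.

Lemma kk_r c i : A c (rshift 4 i) = fun y => (s * b c 0 i) * sin (th y).
Proof. by apply: funext => y; rewrite /A /kk_field split_r. Qed.

Lemma fs_ll c mu nu y : fstrength (A c) (lshift n mu) (lshift n nu) y = 0.
Proof. by rewrite /fstrength !partial_l subrr. Qed.

Lemma fs_lr c mu j y :
  fstrength (A c) (lshift n mu) (rshift 4 j) y = s * a c 0 mu * sin (th y) * v j.
Proof. by rewrite /fstrength partial_l kk_l partial_cos; rewrite /th /v; ring. Qed.

Lemma fs_rl c i nu y :
  fstrength (A c) (rshift 4 i) (lshift n nu) y = - (s * a c 0 nu * sin (th y) * v i).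
Proof. by rewrite /fstrength partial_l kk_l partial_cos; rewrite /th /v; ring. Qed.

Lemma fs_rr c i j y :
  fstrength (A c) (rshift 4 i) (rshift 4 j) y =
  s * cos (th y) * (b c 0 j * v i - b c 0 i * v j).
Proof. by rewrite /fstrength !kk_r !partial_sin; rewrite /th /v; ring. Qed.
End K.

Lemma dsum (R : comNzRingType) n (b v : 'I_n -> R) :
  \sum_i \sum_j (b j * v i - b i * v j) ^+ 2 =
  2 * ((\sum_i v i ^+ 2) * (\sum_i b i ^+ 2) - (\sum_i b i * v i) ^+ 2).
Proof.
have E : forall i j, (b j * v i - b i * v j) ^+ 2 =
   v i ^+ 2 * b j ^+ 2 + v j ^+ 2 * b i ^+ 2 - 2 * ((b i * v i) * (b j * v j)).
  by move=> i j; ring.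
under eq_bigr do under eq_bigr do rewrite E.
set X := \sum_i v i ^+ 2; set Y := \sum_i b i ^+ 2.
have h1 : \sum_i \sum_j v i ^+ 2 * b j ^+ 2 = X * Y by rewrite big_distrlr.
have h2 : \sum_i \sum_j v j ^+ 2 * b i ^+ 2 = X * Y by rewrite exchange_big.
have h3 : \sum_i \sum_j 2 * ((b i * v i) * (b j * v j)) = 2 * (\sum_i b i * v i) ^+ 2.
  by rewrite expr2 big_distrlr mulr_sumr; apply: eq_bigr => i _; rewrite mulr_sumr.
rewrite (eq_bigr (fun i => \sum_j v i ^+ 2 * b j ^+ 2 + \sum_j v j ^+ 2 * b i ^+ 2
   - \sum_j 2 * ((b i * v i) * (b j * v j)))); last by move=> i _; rewrite sumrB big_split.
rewrite sumrB big_split /= h1 h2 h3; ring.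
Qed.

Lemma qform (R : realType) n (v b : 'rV[R]_n) :
  (b *m mass_matrix v *m b^T) 0 0 =
  vnorm2 v * (\sum_i b 0 i ^+ 2) - (\sum_i b 0 i * v 0 i) ^+ 2.
Proof.
rewrite /mass_matrix mulmxBr mulmxBl mul_mx_scalar -scalemxAl !mulmxA.
rewrite -(mulmxA (b *m v^T)) !mxE big_ord1 !mxE; congr (_ * _ - _).
  by apply: eq_bigr => i _; rewrite !mxE expr2.
rewrite expr2; congr (_ * _); apply: eq_bigr => i _; rewrite !mxE //.
exact: mulrC.
Qed.

Section K2.
Variable R : realType.
Variables n d : nat.
Variable Rad : 'I_n -> R.
Variable m : 'I_n -> nat.
Variable a : 'I_d -> 'rV[R]_4.
Variable b : 'I_d -> 'rV[R]_n.
Let s := Num.sqrt (2 / Pvol Rad).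
Let A := kk_field Rad m a b.
Let th := theta Rad m.
Let v := vk Rad m.

Lemma Sc c y :
  \sum_(M < 4 + n) \sum_(N < 4 + n)
     Defs.eta R M * Defs.eta R N * fstrength (A c) M N y ^+ 2 =
  - 2 * (s ^+ 2 * sin (th y) ^+ 2) * (\sum_j v j ^+ 2) * mink n (a c) +
  2 * (s ^+ 2 * cos (th y) ^+ 2) *
    ((\sum_j v j ^+ 2) * (\sum_i b c 0 i ^+ 2) - (\sum_i b c 0 i * v i) ^+ 2).
Proof.
have L : forall mu, \sum_(N < 4 + n) Defs.eta R (lshift n mu) * Defs.eta R N *
    fstrength (A c) (lshift n mu) N y ^+ 2 =
    - (Defs.eta R (lshift n mu) * a c 0 mu ^+ 2) * (s ^+ 2 * sin (th y) ^+ 2) *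
      \sum_j v j ^+ 2.
  move=> mu; rewrite big_split_ord /= big1 ?add0r; last first.
    by move=> nu _; rewrite fs_ll expr0n mulr0.
  under eq_bigr do rewrite fs_lr eta_r.
  rewrite mulr_sumr; apply: eq_bigr => j _; rewrite /th /v /s; ring.
have Rr : forall i, \sum_(N < 4 + n) Defs.eta R (rshift 4 i) * Defs.eta R N *
    fstrength (A c) (rshift 4 i) N y ^+ 2 =
    - (s ^+ 2 * sin (th y) ^+ 2 * v i ^+ 2) * mink n (a c) +
    s ^+ 2 * cos (th y) ^+ 2 * \sum_j (b c 0 j * v i - b c 0 i * v j) ^+ 2.
  move=> i; rewrite big_split_ord /=; congr (_ + _).
    rewrite /mink mulr_sumr; apply: eq_bigr => nu _.
    rewrite fs_rl eta_r /th /v /s; ring.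
  rewrite mulr_sumr; apply: eq_bigr => j _; rewrite fs_rr !eta_r /th /v /s; ring.
rewrite big_split_ord /=.
under eq_bigr do rewrite L.
under [X in _ + X]eq_bigr do rewrite Rr.
rewrite big_split /=.
rewrite -!mulr_suml !sumrN -!mulr_sumr.
rewrite (dsum (fun j => b c 0 j) v) /mink; ring.
Qed.

Let V := \sum_j v j ^+ 2.
Let SM := \sum_c mink n (a c).
Let SQ := \sum_c (V * (\sum_i b c 0 i ^+ 2) - (\sum_i b c 0 i * v i) ^+ 2).

Lemma Ldens_form y : Ldensity A y =
  (s ^+ 2 / 4 * (V * SM - SQ)) + (- (s ^+ 2 / 4) * (V * SM + SQ)) * cos (2 * th y).
Proof.
rewrite /Ldensity; under eq_bigr do rewrite Sc.
rewrite big_split /= -!mulr_sumr /SM /SQ -/V.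
have c2 : cos (2 * th y) = cos (th y) ^+ 2 *+ 2 - 1 by rewrite -cos_mulr2n mulr_natl.
rewrite c2 sin2cos2 -mulr_natl; ring.
Qed.

Hypothesis Rpos : forall i, 0 < Rad i.
Hypothesis hm : exists i, m i != 0%N.

Lemma vnorm2_kkv : vnorm2 (kkv Rad m) = V.
Proof. by apply: eq_bigr => j _; rewrite mxE. Qed.

Lemma Pvol_gt0 : 0 < Pvol Rad.
Proof. by apply: prodr_gt0 => i _. Qed.

Lemma mode_result : Lmass_mode Rad m a b =
  \sum_(c < d) ((1 / 2) * vnorm2 (kkv Rad m) * mink n (a c)
     - (1 / 2) * (b c *m mass_matrix (kkv Rad m) *m (b c)^T) 0 0).
Proof.
rewrite /Lmass_mode /box_int.
rewrite (_ : Ldensity _ = fun y => (s ^+ 2 / 4 * (V * SM - SQ)) +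
   (- (s ^+ 2 / 4) * (V * SM + SQ)) * cos (2 * theta Rad m y)); last first.
  by apply: funext => y; rewrite Ldens_form.
rewrite box_seq //.
have -> : all (fun i => m i == 0%N) (enum 'I_n) = false.
  case: hm => i mi; apply/negbTE/allPn; exists i => //; by rewrite mem_enum.
rewrite mulr0 addr0.
have -> : \prod_(i <- enum 'I_n) Rad i = Pvol Rad by rewrite /Pvol big_enum.
have P0 := Pvol_gt0.
have s2 : s ^+ 2 = 2 / Pvol Rad by rewrite /s sqr_sqrtr // divr_ge0 // ltW.
under eq_bigr do rewrite qform vnorm2_kkv.
rewrite sumrB -!mulr_sumr -/SM.
rewrite (_ : \sum_c _ = SQ); last first.
  apply: eq_bigr => c _; congr (_ - _ ^+ 2); apply: eq_bigr => i _; by rewrite mxE.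
rewrite s2; field; by rewrite gt_eqF.
Qed.
End K2.

Section Z.
Variable R : realType.
Variables n d : nat.
Variable Rad : 'I_n -> R.
Variable a : 'I_d -> 'rV[R]_4.
Hypothesis Rpos : forall i, 0 < Rad i.

Lemma partial_cst (M : 'I_(4 + n)) (k : R) (y : 'rV[R]_n) : partial M (fun _ => k) y = 0.
Proof. by rewrite /partial; case: fintype.split => // i; exact: derive_cst. Qed.

Lemma zero_mode_result : Lmass_zero Rad a = 0.
Proof.
have F : forall c M N y, fstrength (zero_field Rad a c) M N y = 0.
  move=> c M N y; rewrite /fstrength.
  rewrite (_ : zero_field Rad a c N = fun _ => zero_field Rad a c N 0); last first.
    by apply: funext => z; rewrite /zero_field.
  rewrite (_ : zero_field Rad a c M = fun _ => zero_field Rad a c M 0); last first.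
    by apply: funext => z; rewrite /zero_field.
  by rewrite !partial_cst subrr.
rewrite /Lmass_zero /box_int.
rewrite (_ : Ldensity _ = fun y => 0 + 0 * cos (2 * theta Rad (fun _ => 0%N) y)); last first.
  apply: funext => y; rewrite /Ldensity big1 ?mulr0 ?mul0r ?addr0 // => c _.
  by rewrite big1 // => M _; rewrite big1 // => N _; rewrite F expr0n mulr0.
by rewrite box_seq // mul0r add0r mulr0.
Qed.
End Z.

Local Close Scope classical_set_scope.
Lemma towers (R : realType) n :
  #|[set S : {set 'I_n} | S != finset.set0]| = (2 ^ n - 1)%N /\
  (forall S : {set 'I_n}, S != finset.set0 -> exists m, in_tower S m) /\
  (forall m : 'I_n -> nat, (exists i, m i != 0%N) ->
     exists! S : {set 'I_n}, S != finset.set0 /\ in_tower S m).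
Proof.
split.
  rewrite (_ : [set S : {set 'I_n} | S != finset.set0] = ~: [set finset.set0]); last first.
    by apply/setP => S; rewrite !inE.
  have := cardsC [set (finset.set0 : {set 'I_n})]; rewrite cards1 -cardsT -powersetT card_powerset cardsT card_ord.
  by move=> <-; rewrite add1n subSS subn0.
split.
  move=> S _; exists (fun i => nat_of_bool (i \in S)); apply/forallP => i.
  by case: (i \in S).
move=> m [i mi]; exists [set i | m i != 0%N]; split.
  split; first by apply/set0Pn; exists i; rewrite inE.
  by apply/forallP => j; rewrite inE.
move=> S [_ /forallP H]; apply/setP => j; rewrite inE; by rewrite (eqP (H j)).
Qed.


Lemma char_poly_gen (F : fieldType) n (v : 'rV[F]_n) : (0 < n)%N ->
  char_poly ((\sum_i v 0 i ^+ 2)%:M - v^T *m v) =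
  'X * ('X - (\sum_i v 0 i ^+ 2)%:P) ^+ (n - 1).
Proof. by case: n v => // k v _; rewrite subSS subn0; exact: char_poly_rank1. Qed.

End Helpers.
Import Helpers.
Unset Implicit Arguments.

Theorem mainTheorem2 (R : realType) (n d : nat) (Rad : 'I_n -> R) :
  (0 < n)%N -> (forall i, 0 < Rad i) ->
  (* zero mode: massless gauge vector *)
  (forall a : 'I_d -> 'rV[R]_4, Lmass_zero Rad a = 0) /\
  (* massive modes *)
  (forall m : 'I_n -> nat, (exists i, m i != 0%N) ->
     let v := kkv Rad m in
     let M := mass_matrix v in
     (forall (a : 'I_d -> 'rV[R]_4) (b : 'I_d -> 'rV[R]_n),
        Lmass_mode Rad m a b =
        \sum_(c < d) ((1 / 2) * vnorm2 v * mink n (a c)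
                      - (1 / 2) * (b c *m M *m (b c)^T) 0 0)) /\
     vnorm2 v = \sum_(i < n) (2 * pi * (m i)%:R / Rad i) ^+ 2 /\
     0 < vnorm2 v /\
     M^T = M /\
     M *m v^T = 0 /\ v != 0 /\
     char_poly M = 'X * ('X - (vnorm2 v)%:P) ^+ (n - 1) /\
     \rank (eigenspace M 0) = 1%N /\
     \rank (eigenspace M (vnorm2 v)) = (n - 1)%N) /\
  (* KK towers: one per nonempty subset of {1..n}, each nonempty,
     every nonzero mode in exactly one *)
  #|[set S : {set 'I_n} | S != finset.set0]| = (2 ^ n - 1)%N /\
  (forall S : {set 'I_n}, S != finset.set0 -> exists m, in_tower S m) /\
  (forall m : 'I_n -> nat, (exists i, m i != 0%N) ->
     exists! S : {set 'I_n}, S != finset.set0 /\ in_tower S m).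
Proof.
move=> n0 Rpos.
split; first by move=> a; exact: zero_mode_result.
split; last exact: (towers R n).
move=> m hm v M.
have vE : vnorm2 v = \sum_(i < n) (2 * pi * (m i)%:R / Rad i) ^+ 2.
  by apply: eq_bigr => i _; rewrite /v mxE.
have vpos : 0 < vnorm2 v.
  case: hm => i mi; rewrite /vnorm2 (bigD1 i) //=.
  have h1 : 0 < v 0 i ^+ 2.
    apply: exprn_gt0; rewrite /v mxE; apply: divr_gt0 => //.
    apply: mulr_gt0; first by apply: mulr_gt0 => //; exact: pi_gt0.
    by rewrite ltr0n lt0n.
  have h2 : 0 <= \sum_(j < n | j != i) v 0 j ^+ 2 by apply: sumr_ge0 => j _; exact: sqr_ge0.
  lra.
have c0 : vnorm2 v != 0 by rewrite gt_eqF.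
split; first by move=> a b; exact: mode_result.
split; first exact: vE.
split; first exact: vpos.
split; first exact: MT.
split; first exact: MvT.
split; first exact: (v_neq0 c0).
split; first exact: char_poly_gen.
split; first exact: (rank_eig0 c0 n0).
by rewrite (rank_eigc c0) subn1.
Qed.
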